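(* Let $m\ge1$ and $2\le K\le N$ be integers with $m^2(K-1)-mN\ne0$. Put $$\Delta=(m(K-1))^2+(N-K+1)\big(m^2(K-1)-mN\big),$$ assume $\Delta\ge0$, and define $$x_0=\frac{-m(K-1)+\sqrt{\Delta}}{m^2(K-1)-mN},\qquad d=\frac{Nm}{m+\frac1{x_0}}.$$ Assume $0<x_0\le\frac12$ and $d\le N$. Use the multiplicity assignment with coefficient $t=x_0$ (received symbol multiplicity $M>0$, each 1-bit-flipped neighbour multiplicity $tM$, others $0$). Then for every transmitted codeword and every error pattern of the binary symmetric channel flipping at most $d$ bits in total, the ASD sufficient condition $S\ge\sqrt{2(K-1)C}$ holds, i.e., ASD is guaranteed to decode up to $d$ bit errors.
   Context: Setting: a Reed–Solomon code of length $N$ and dimension $K$ over $GF(2^m)$ whose symbols are sent as $m$ bits each over a binary symmetric channel. The multiplicity assignment is fixed independently of the received word: in each position the received symbol gets multiplicity $M$, each of the $m$ symbols obtained from it by flipping exactly one bit gets multiplicity $tM$ ($0\le t\le1$), and all other symbols get $0$. The score $S$ is the sum over the $N$ positions of the multiplicity assigned to the transmitted symbol; the (large-multiplicity approximation of the) cost is $C=\frac12\sum(\text{multiplicities})^2=\frac N2M^2(1+mt^2)$. *)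

(* Defs.v *)
From HB Require Import structures.
From mathcomp Require Import all_boot all_order all_algebra.
From mathcomp Require Import reals.
Set Implicit Arguments. Unset Strict Implicit. Unset Printing Implicit Defensive.
Import Order.TTheory GRing.Theory Num.Theory.
Local Open Scope ring_scope.

(* A symbol of GF(2^m), viewed as its m-bit binary representation. *)
Definition sym (m : nat) := {ffun 'I_m -> bool}.

Definition hamming (m : nat) (a b : sym m) : nat := #|[pred j | a j != b j]|.

Definition bitweight (m : nat) (e : sym m) : nat := #|[pred j | e j]|.

(* Received symbol: transmitted symbol XOR error mask. *)
Definition flip (m : nat) (c e : sym m) : sym m := [ffun j => addb (c j) (e j)].

Definition mult (R : realType) (m : nat) (M t : R) (r a : sym m) : R :=
  if a == r then M else if hamming a r == 1%N then t * M else 0.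

Definition score (R : realType) (m N : nat) (M t : R)
  (r c : 'I_N -> sym m) : R :=
  \sum_(i < N) mult M t (r i) (c i).

(* Cost (large-multiplicity approximation): (1/2) * sum of squared multiplicities. *)
Definition cost (R : realType) (m N : nat) (M t : R) (r : 'I_N -> sym m) : R :=
  2^-1 * \sum_(i < N) \sum_(a : sym m) (mult M t (r i) a) ^+ 2.

(* Main.v *)
Require Import Defs.
From HB Require Import structures.
From mathcomp Require Import all_boot all_order all_algebra.
From mathcomp Require Import reals.
From mathcomp Require Import ring lra zify.
Import Order.TTheory GRing.Theory Num.Theory.
Local Open Scope ring_scope.

Lemma hamming_flip m (c e : sym m) : hamming c (flip c e) = bitweight e.
Proof.
rewrite /hamming /bitweight; apply: eq_card => j /=.
by rewrite !inE /= /flip ffunE; case: (c j); case: (e j).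
Qed.

Lemma hamming0 m (a b : sym m) : hamming a b = 0%N -> a = b.
Proof.
move=> /card0_eq H; apply/ffunP => j.
by have := H j; rewrite !inE /= => /negbFE/eqP.
Qed.

Lemma card_ham1 m (r : sym m) : (#|[pred a | hamming a r == 1%N]| <= m)%N.
Proof.
pose g (j : 'I_m) : sym m := [ffun k => if k == j then ~~ r k else r k].
have Hs : [pred a | hamming a r == 1%N] \subset codom g.
  apply/subsetP => a; rewrite inE /= /hamming.
  rewrite -cardsE => /cards1P [j Hj].
  apply/codomP; exists j; apply/ffunP => k; rewrite /g ffunE.
  have := congr1 (fun S : {set 'I_m} => k \in S) Hj; rewrite !inE /=.
  case: (k =P j) => [-> |_ ].
    by case: (a j); case: (r j).
  by move/negbFE/eqP.
apply: leq_trans (subset_leq_card Hs) _.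
by apply: leq_trans (card_size _) _; rewrite size_codom card_ord.
Qed.

Lemma sum_mult_sq (R : realType) m (M t : R) (r : sym m) :
  \sum_(a : sym m) (mult M t r a) ^+ 2 <= M ^+ 2 + m%:R * (t * M) ^+ 2.
Proof.
apply: (@le_trans _ _ (\sum_(a : sym m) ((if a == r then M ^+ 2 else 0)
        + (if hamming a r == 1%N then (t * M) ^+ 2 else 0)))).
  apply: ler_sum => a _; rewrite /mult.
  case: eqP => [->|_]; first by rewrite lerDl; case: ifP => _; rewrite ?sqr_ge0.
  by rewrite add0r; case: ifP => _; rewrite ?expr0n.
rewrite big_split /= -!big_mkcond /= big_pred1_eq lerD2l sumr_const.
rewrite mulr_natl; apply: ler_wpMn2l; first exact: sqr_ge0.
exact: card_ham1.
Qed.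

Lemma mult_ge (R : realType) m (M t : R) (c e : sym m) :
  0 <= t -> t <= 1/2 -> 0 <= M ->
  M * (1 - (1 - t) * (bitweight e)%:R) <= mult M t (flip c e) c.
Proof.
move=> t0 t1 M0; rewrite /mult -(hamming_flip _ c e).
case: eqP => [H|H].
  by rewrite -H /hamming (@eq_card0 _ _ _) ?mulr0 ?subr0 ?mulr1 // => j; rewrite !inE eqxx.
case: eqP => [->|H1]; first by rewrite mulr1; lra.
have H2 : (2 <= hamming c (flip c e))%N.
  have H0 : hamming c (flip c e) <> 0%N by move/hamming0.
  by move: H0 H1; case: (hamming c (flip c e)) => [|[|k]].
have : 2 <= (hamming c (flip c e))%:R :> R by rewrite (ler_nat R 2).
set w := _%:R => hw.
rewrite mulrC. apply: mulr_le0_ge0 => //. nra.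
Qed.

Theorem theorem2 (R : realType) (m N K : nat)
  (hm : (1 <= m)%N) (hK : (2 <= K)%N) (hKN : (K <= N)%N)
  (ha : ((m ^ 2 * (K - 1))%:R - (m * N)%:R : R) != 0)
  (hDelta : 0 <= ((m * (K - 1))%:R ^+ 2
                  + (N - K + 1)%:R * ((m ^ 2 * (K - 1))%:R - (m * N)%:R) : R))
  (x0 d : R)
  (hx0 : x0 = (- (m * (K - 1))%:R
               + Num.sqrt ((m * (K - 1))%:R ^+ 2
                           + (N - K + 1)%:R * ((m ^ 2 * (K - 1))%:R - (m * N)%:R)))
              / ((m ^ 2 * (K - 1))%:R - (m * N)%:R))
  (hd : d = (N * m)%:R / (m%:R + 1 / x0))
  (hx0pos : 0 < x0) (hx0half : x0 <= 1 / 2) (hdN : d <= N%:R)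
  (M : R) (hM : 0 < M)
  (c e : 'I_N -> sym m)
  (he : ((\sum_(i < N) bitweight (e i))%N)%:R <= d) :
  Num.sqrt (2 * (K - 1)%:R * cost M x0 (fun i => flip (c i) (e i)))
    <= score M x0 (fun i => flip (c i) (e i)) c.
Proof.
set t := x0 in hx0 hd hx0pos hx0half *.
set W : R := ((\sum_(i < N) bitweight (e i))%N)%:R in he.
have Hsc : M * (N%:R - (1 - t) * W) <= score M t (fun i => flip (c i) (e i)) c.
  apply: (@le_trans _ _ (\sum_(i < N) M * (1 - (1 - t) * (bitweight (e i))%:R))).
    rewrite -mulr_sumr sumrB sumr_const card_ord -mulr_sumr -natr_sum.
    by rewrite /W.
  rewrite /score; apply: ler_sum => i _; apply: mult_ge => //; [exact: ltW | exact: ltW].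
have Hco : cost M t (fun i => flip (c i) (e i)) <= 2^-1 * (N%:R * (M ^+ 2 + m%:R * (t * M) ^+ 2)).
  rewrite /cost ler_wpM2l ?invr_ge0 ?ler0n //.
  apply: (@le_trans _ _ (\sum_(i < N) (M ^+ 2 + m%:R * (t * M) ^+ 2))).
    by apply: ler_sum => i _; apply: sum_mult_sq.
  by rewrite sumr_const card_ord (mulr_natl (M ^+ 2 + _) N).
have E4 : (N - K + 1)%:R = N%:R - (K - 1)%:R :> R.
  by rewrite -natrB; [congr (_%:R); lia | lia].
rewrite E4 ?natrM ?natrX in hx0 hDelta ha hd.
set n : R := N%:R in hx0 hDelta ha hd hdN Hsc Hco *.
set k : R := (K - 1)%:R in hx0 hDelta ha hd hdN Hsc Hco *.
set mm : R := m%:R in hx0 hDelta ha hd hdN Hsc Hco *.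
have n0 : 0 <= n by rewrite ler0n.
have k0 : 0 <= k by rewrite ler0n.
have mm1 : 1 <= mm by rewrite (ler_nat R 1).
set a := mm ^+ 2 * k - mm * n in hx0 hDelta ha.
set s := Num.sqrt _ in hx0.
have hs : s ^+ 2 = (mm * k) ^+ 2 + (n - k) * a by rewrite sqr_sqrtr.
have ht : t * a = - (mm * k) + s by rewrite hx0 mulfVK.
have H0 : a * (a * t ^+ 2 + 2 * mm * k * t + k - n) = 0.
  have -> : a * (a * t ^+ 2 + 2 * mm * k * t + k - n)
     = (t * a + mm * k) ^+ 2 - ((mm * k) ^+ 2 + (n - k) * a) by ring.
  rewrite ht; have -> : - (mm * k) + s + mm * k = s by ring.
  by rewrite hs subrr.
have H1 : a * t ^+ 2 + 2 * mm * k * t + k - n = 0.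
  by move/eqP: H0; rewrite mulf_eq0 (negPf ha) /= => /eqP.
have Q : n * (1 + mm * t ^+ 2) = k * (mm * t + 1) ^+ 2.
  rewrite /a in H1; nra.
have tp : mm * t + 1 != 0 by apply/lt0r_neq0; nra.
have hd2 : d * (mm * t + 1) = n * mm * t.
  by rewrite hd; field; rewrite tp lt0r_neq0.
have hY : n - (1 - t) * d = k * (mm * t + 1).
  apply: (mulIf tp).
  have -> : (n - (1 - t) * d) * (mm * t + 1) = n * (mm * t + 1) - (1 - t) * (d * (mm * t + 1)) by ring.
  rewrite hd2.
  have -> : n * (mm * t + 1) - (1 - t) * (n * mm * t) = n * (1 + mm * t ^+ 2) by ring.
  by rewrite Q; ring.
have Hsc' : M * (k * (mm * t + 1)) <= score M t (fun i => flip (c i) (e i)) c.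
  rewrite -hY; apply: le_trans Hsc; rewrite ler_pM2l // lerD2l lerN2; apply: ler_wpM2l => //; lra.
have Y0 : 0 <= M * (k * (mm * t + 1)).
  by rewrite mulr_ge0 ?(ltW hM) // mulr_ge0 // addr_ge0 // mulr_ge0 ?(ltW hx0pos) //; lra.
apply: le_trans Hsc'.
rewrite -(ger0_norm Y0) -sqrtr_sqr ler_sqrt ?sqr_ge0 //.
have -> : (M * (k * (mm * t + 1))) ^+ 2 = k * (n * (M ^+ 2 + mm * (t * M) ^+ 2)).
  have -> : (M * (k * (mm * t + 1))) ^+ 2 = k * M ^+ 2 * (k * (mm * t + 1) ^+ 2) by ring.
  by rewrite -Q; ring.
have : 2 * k * cost M t (fun i => flip (c i) (e i)) <= 2 * k * (2^-1 * (n * (M ^+ 2 + mm * (t * M) ^+ 2))).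
  by rewrite ler_wpM2l // mulr_ge0.
have -> : 2 * k * (2^-1 * (n * (M ^+ 2 + mm * (t * M) ^+ 2))) = k * (n * (M ^+ 2 + mm * (t * M) ^+ 2)) by field.
by [].
Qed.
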